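(* There exists an instance with three agents $N=\{1,2,3\}$ and a finite item set $A$ in which all values $V_i(j,a)$ are nonnegative, together with a complete allocation that is envy-free but satisfies neither PROP-Max nor PROP-Ave.
   Context: Setting: agents $N=\{1,\dots,n\}$, finite item set $A$; a complete allocation $\pi$ partitions $A$ into bundles $\pi_1,\dots,\pi_n$; $\pi(a)$ is the agent receiving $a$; $V_i(j,a)\in\mathbb{R}$ is agent $i$'s value when item $a$ goes to agent $j$; $V_i(\pi)=\sum_{a\in A}V_i(\pi(a),a)$. $\pi^{i\leftrightarrow j}$ is $\pi$ with bundles of $i$ and $j$ swapped. $\pi$ is envy-free if there are no $i,j$ with $V_i(\pi^{i\leftrightarrow j})>V_i(\pi)$. With $V_i^{max}(a)=\max_{j\in N}V_i(j,a)$, $\pi$ satisfies PROP-Max if $V_i(\pi)\ge\frac1n\sum_{a\in A}V_i^{max}(a)$ for all $i$, and PROP-Ave if $V_i(\pi)\ge\frac1n\sum_{a\in A}\sum_{j\in N}V_i(j,a)$ for all $i$. *)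

(* Defs.v *)
From HB Require Import structures.
From mathcomp Require Import all_boot all_order all_algebra.
From mathcomp Require Import Rstruct.
From Stdlib Require Import Reals.
Set Implicit Arguments. Unset Strict Implicit. Unset Printing Implicit Defensive.
Import Order.TTheory GRing.Theory Num.Theory.
Local Open Scope ring_scope.

(* V i j a = value of agent i when item a goes to agent j.
   A complete allocation is a function pi : A -> 'I_n (pi a = receiving agent);
   bundle pi_j = {a | pi a = j}. *)

Definition valuation (n : nat) (A : finType) := 'I_n -> 'I_n -> A -> R.
Definition allocation (n : nat) (A : finType) := {ffun A -> 'I_n}.

Definition util n (A : finType) (V : valuation n A) (i : 'I_n)
  (pi : allocation n A) : R :=
  \sum_(a : A) V i (pi a) a.

Definition swap_alloc n (A : finType) (pi : allocation n A) (i j : 'I_n)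
  : allocation n A :=
  [ffun a => if pi a == i then j else if pi a == j then i else pi a].

Definition envy_free n (A : finType) (V : valuation n A) (pi : allocation n A)
  : Prop :=
  ~ (exists i j : 'I_n, util V i (swap_alloc pi i j) > util V i pi).

Definition Vmax n (A : finType) (V : valuation n A) (i : 'I_n) (a : A) : R :=
  (* max over j in N; seeded with V i i a, itself one of the terms *)
  \big[Num.max/V i i a]_(j : 'I_n) V i j a.

Definition PROP_Max n (A : finType) (V : valuation n A) (pi : allocation n A)
  : Prop :=
  forall i : 'I_n, util V i pi >= (n%:R)^-1 * \sum_(a : A) Vmax V i a.

Definition PROP_Ave n (A : finType) (V : valuation n A) (pi : allocation n A)
  : Prop :=
  forall i : 'I_n,
    util V i pi >= (n%:R)^-1 * \sum_(a : A) \sum_(j : 'I_n) V i j a.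

(* Main.v *)
Require Import Defs.
From HB Require Import structures.
From mathcomp Require Import all_boot all_order all_algebra.
From mathcomp Require Import Rstruct.
From Stdlib Require Import Reals.
Import Order.TTheory GRing.Theory Num.Theory.
Local Open Scope ring_scope.

Definition V0 : valuation 3 'I_1 :=
  fun i j _ => if (i == 1 :> nat) && (j == 2 :> nat) then 1 else 0.
Definition pi0 : allocation 3 'I_1 := [ffun _ => ord0].

Lemma sum_unit (F : 'I_1 -> R) : \sum_(a : 'I_1) F a = F ord0.
Proof. by rewrite big_ord1. Qed.

Theorem proposition3 :
  exists (A : finType) (V : valuation 3 A) (pi : allocation 3 A),
    (forall (i j : 'I_3) (a : A), 0 <= V i j a) /\
    envy_free V pi /\ ~ PROP_Max V pi /\ ~ PROP_Ave V pi.
Proof.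
exists ('I_1 : finType), V0, pi0; split; [|split; [|split]].
- by move=> i j a; rewrite /V0; case: ifP => _ //; rewrite ler01.
- move=> [i [j]]; rewrite /util !sum_unit /swap_alloc /pi0 /V0 !ffunE.
  case: i => [[|[|[|i]]] Hi] //=; case: j => [[|[|[|j]]] Hj] //=;
    by rewrite ltxx.
- move=> /(_ 1); rewrite /util /Vmax !sum_unit /pi0 /V0 ffunE /=.
  idtac.
  rewrite big_ord_recl /= !big_ord_recl big_ord0 /=. 
  rewrite !maxEle ler10 ler01 ler01 mulr1 => H.
  have : (0:R) < 3^-1 by rewrite invr_gt0 ltr0n.
  by rewrite ltNge H.
- move=> /(_ 1); rewrite /util !sum_unit /pi0 /V0 ffunE /=.
  rewrite big_ord_recl /= !big_ord_recl big_ord0 /= !addr0 !add0r mulr1 => H.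
  have : (0:R) < 3^-1 by rewrite invr_gt0 ltr0n.
  by rewrite ltNge H.
Qed.
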